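(* Consider the climate-coalition game with linear-quadratic utility and populations $P_1>P_2>\dots>P_N>0$ (all distinct), $N\ge 3$. Restrict attention to pure-strategy Nash equilibria of the participation stage in which the coalition is nonempty. Then in any such equilibrium the coalition has at most two members, and country 1 (the most populous) is always a member. More precisely: (i) if $2P_2<P_1$, the unique equilibrium coalition is $\{1\}$; (ii) if $2P_2=P_1$, the equilibrium coalitions are exactly $\{1\}$ and $\{1,2\}$; (iii) if $2P_2>P_1$, every equilibrium coalition has exactly two members and is of the form $\{1,j\}$ with $j\in\{2,3,\dots,l\}$, where $l$ is the largest index such that $P_l\ge\max\{P_1/2,\;2P_2-P_1\}$; conversely each such $\{1,j\}$ is an equilibrium coalition.
   Context: Climate-coalition game: $N$ countries with populations $P_i>0$. The per-capita utility in country $i$ is $u_i=\beta A-\frac{\gamma}{2}a_i^2$ with $\beta,\gamma>0$, where $a_i\in\mathbb{R}$ is country $i$'s per-capita abatement and $A=\sum_j P_ja_j$. Stage 1: each country simultaneously and non-cooperatively decides whether to join a coalition $S$ (a strategy is ''join'' or ''stay out''). Stage 2: the members of $S$ jointly choose their per-capita abatements to maximize the coalition's total welfare $W_S=\sum_{i\in S}P_iu_i$ (no transfers), while each outsider chooses its per-capita abatement to maximize its own $u_i$. A participation profile is a Nash equilibrium if no country can strictly increase its per-capita utility (evaluated at the resulting stage-2 outcome) by unilaterally switching its participation decision. (A one-member coalition and an empty coalition induce the same abatements, which is why only nonempty coalitions are considered.) *)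

(* Defs.v *)
From mathcomp Require Import all_boot all_order all_algebra.
Set Implicit Arguments. Unset Strict Implicit. Unset Printing Implicit Defensive.
Import Order.TTheory GRing.Theory Num.Theory.
Local Open Scope ring_scope.

Section Game.
Variables (R : realFieldType) (N : nat) (P : 'I_N -> R) (beta gamma : R).

Definition aggA (a : 'I_N -> R) : R := \sum_(j < N) P j * a j.

Definition util (i : 'I_N) (a : 'I_N -> R) : R :=
  beta * aggA a - gamma / 2 * a i ^+ 2.

Definition welfare (S : {set 'I_N}) (a : 'I_N -> R) : R :=
  \sum_(i in S) P i * util i a.

Definition upd (a : 'I_N -> R) (i : 'I_N) (x : R) : 'I_N -> R :=
  fun j => if j == i then x else a j.

Definition stage2 (S : {set 'I_N}) (a : 'I_N -> R) : Prop :=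
  (forall b : 'I_N -> R, (forall j, j \notin S -> b j = a j) ->
     welfare S b <= welfare S a) /\
  (forall i, i \notin S -> forall x : R, util i (upd a i x) <= util i a).

Definition toggle (S : {set 'I_N}) (i : 'I_N) : {set 'I_N} :=
  if i \in S then S :\ i else i |: S.

Definition is_NE (S : {set 'I_N}) : Prop :=
  forall (i : 'I_N) (a a' : 'I_N -> R),
    stage2 S a -> stage2 (toggle S i) a' -> ~ (util i a < util i a').

End Game.

(* Main.v *)
Require Import Defs.
From mathcomp Require Import all_boot all_order all_algebra.
From mathcomp Require Import ring lra zify.
Import Order.TTheory GRing.Theory Num.Theory.
Local Open Scope ring_scope.
Set Implicit Arguments. Unset Strict Implicit.

Lemma quad0 (R : realFieldType) (c d : R) : 0 < d ->
  (forall t, c * t - d * t ^+ 2 <= 0) -> c = 0.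
Proof.
move=> d0 H; have := H (c / (2 * d)).
have -> : c * (c / (2 * d)) - d * (c / (2 * d)) ^+ 2 = c ^+ 2 / (4 * d).
  field; lra.
have h4 : 0 < 4 * d by lra.
rewrite ler_pdivrMr // mul0r => h.
by apply/eqP; rewrite -sqrf_eq0 eq_le sqr_ge0 andbT.
Qed.

Definition PS (R : realFieldType) N (P : 'I_N -> R) (S : {set 'I_N}) := \sum_(j in S) P j.
Definition QS (R : realFieldType) N (P : 'I_N -> R) (S : {set 'I_N}) := \sum_(j in ~: S) P j ^+ 2.
Definition opt (R : realFieldType) N (P : 'I_N -> R) (beta gamma : R) (S : {set 'I_N}) (j : 'I_N) :=
  if j \in S then beta * PS P S / gamma else beta * P j / gamma.

Lemma aggA_upd (R : realFieldType) N (P : 'I_N -> R) a i x :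
  aggA P (upd a i x) = aggA P a + P i * (x - a i).
Proof.
rewrite /aggA (bigD1 i) //= [in RHS](bigD1 i) //= /upd eqxx.
have -> : \sum_(j < N | j != i) P j * (if j == i then x else a j) = \sum_(j < N | j != i) P j * a j.
  by apply: eq_bigr => j /negbTE ->.
ring.
Qed.

Lemma util_upd (R : realFieldType) N (P : 'I_N -> R) (beta gamma : R) a i x :
  util P beta gamma i (upd a i x) = util P beta gamma i a + beta * P i * (x - a i) - gamma / 2 * (x ^+ 2 - a i ^+ 2).
Proof. rewrite /util aggA_upd /upd eqxx; ring. Qed.

Lemma welfare_split (R : realFieldType) N (P : 'I_N -> R) (beta gamma : R) S a :
  welfare P beta gamma S a = beta * aggA P a * PS P S - gamma / 2 * \sum_(i in S) P i * a i ^+ 2.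
Proof.
have -> : beta * aggA P a * PS P S = \sum_(i in S) beta * aggA P a * P i.
  by rewrite /PS mulr_sumr.
rewrite mulr_sumr -sumrB /welfare; apply: eq_bigr => i _; rewrite /util; ring.
Qed.

Lemma sum_split (R : realFieldType) N (S : {set 'I_N}) (F : 'I_N -> R) :
  \sum_j F j = \sum_(j in S) F j + \sum_(j in ~: S) F j.
Proof.
rewrite (bigID (mem S)) /=; congr (_ + _); apply: eq_bigl => j; rewrite ?inE //.
Qed.

Lemma aggA_opt (R : realFieldType) N (P : 'I_N -> R) (beta gamma : R) S :
  aggA P (opt P beta gamma S) = beta / gamma * (PS P S ^+ 2 + QS P S).
Proof.
rewrite /aggA (sum_split S).
have -> : \sum_(j in S) P j * opt P beta gamma S j = beta / gamma * PS P S ^+ 2.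
  rewrite /PS expr2 mulrA mulr_sumr; apply: eq_bigr => j jS; rewrite /opt jS /PS; ring.
have -> : \sum_(j in ~: S) P j * opt P beta gamma S j = beta / gamma * QS P S.
  rewrite /QS mulr_sumr; apply: eq_bigr => j; rewrite inE /opt => /negbTE ->; ring.
ring.
Qed.

Lemma aggA_diff (R : realFieldType) N (P : 'I_N -> R) (S : {set 'I_N}) a b :
  (forall j, j \notin S -> b j = a j) ->
  aggA P b = aggA P a + \sum_(j in S) P j * (b j - a j).
Proof.
move=> hb; apply/eqP; rewrite -subr_eq0 /aggA.
have -> : forall x y z : R, x - (y + z) = (x - y) - z by move=> *; ring.
rewrite -sumrB (sum_split S) [\sum_(j in ~: S) _]big1 ?addr0; last first.
  by move=> j; rewrite inE => /hb ->; ring.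
by rewrite -sumrB big1 // => j _; ring.
Qed.

Lemma stage2_opt (R : realFieldType) N (P : 'I_N -> R) (beta gamma : R) S :
  0 < gamma -> (forall i, 0 < P i) ->
  stage2 P beta gamma S (opt P beta gamma S).
Proof.
move=> g0 P0; have gn0 : gamma != 0 by rewrite gt_eqF.
split.
  move=> b hb; rewrite -subr_ge0 !welfare_split (@aggA_diff _ _ P S _ _ hb).
  set m := beta * PS P S / gamma.
  have Hopt : forall j, j \in S -> opt P beta gamma S j = m by move=> j jS; rewrite /opt jS.
  have -> : \sum_(j in S) P j * (b j - opt P beta gamma S j) = \sum_(j in S) P j * (b j - m).
    by apply: eq_bigr => j /Hopt ->.
  have -> : \sum_(i in S) P i * opt P beta gamma S i ^+ 2 = \sum_(i in S) P i * m ^+ 2.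
    by apply: eq_bigr => j /Hopt ->.
  have E : \sum_(i in S) (- (gamma / 2) * P i * (b i - m) ^+ 2) =
     beta * PS P S * \sum_(j in S) P j * (b j - m) - gamma / 2 * \sum_(i in S) P i * b i ^+ 2
     + gamma / 2 * \sum_(i in S) P i * m ^+ 2.
    rewrite (mulr_sumr _ _ _ (beta * PS P S)) (mulr_sumr _ _ _ (gamma / 2)) (mulr_sumr _ _ _ (gamma / 2)).
    rewrite -sumrB -big_split /=; apply: eq_bigr => i _.
    rewrite /m; field; exact: gn0.
  have : \sum_(i in S) (- (gamma / 2) * P i * (b i - m) ^+ 2) <= 0.
    apply: sumr_le0 => i _; rewrite -mulrA mulNr oppr_le0.
    apply: mulr_ge0; first lra.
    by apply: mulr_ge0; [apply: ltW | apply: sqr_ge0].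
  rewrite E => h; lra.
move=> i iS x; rewrite util_upd.
have -> : opt P beta gamma S i = beta * P i / gamma by rewrite /opt (negbTE iS).
have : 0 <= gamma / 2 * (x - beta * P i / gamma) ^+ 2 by apply: mulr_ge0; [lra|apply: sqr_ge0].
have -> : gamma / 2 * (x - beta * P i / gamma) ^+ 2 = - (beta * P i * (x - beta * P i / gamma) - gamma / 2 * (x ^+ 2 - (beta * P i / gamma) ^+ 2)).
  by field.
lra.
Qed.

Lemma stage2_uniq (R : realFieldType) N (P : 'I_N -> R) (beta gamma : R) S a :
  0 < gamma -> (forall i, 0 < P i) ->
  stage2 P beta gamma S a -> forall j, a j = opt P beta gamma S j.
Proof.
move=> g0 P0 [hW hO] j; have gn0 : gamma != 0 by rewrite gt_eqF.
rewrite /opt; case: ifP => jS.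
  have H : forall t, P j * (beta * PS P S - gamma * a j) * t - (gamma / 2 * P j) * t ^+ 2 <= 0.
    move=> t; have hb : forall k, k \notin S -> upd a j (a j + t) k = a k.
      by move=> k kS; rewrite /upd; case: eqP => // e; rewrite e jS in kS.
    have := hW _ hb; rewrite -subr_ge0 !welfare_split aggA_upd.
    rewrite (big_setD1 _ jS) [in X in _ - X](big_setD1 _ jS) /upd eqxx /=.
    have -> : \sum_(i in S :\ j) P i * (if i == j then a j + t else a i) ^+ 2 =
              \sum_(i in S :\ j) P i * a i ^+ 2.
      by apply: eq_bigr => i; rewrite !inE => /andP [/negbTE -> _].
    move=> h; rewrite -oppr_ge0; apply: (le_trans h).
    rewrite le_eqVlt; apply/orP; left; apply/eqP. set X := (\sum_(i in S :\ j) P i * a i ^+ 2). by field.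
  have Hd : 0 < gamma / 2 * P j by apply: mulr_gt0 => //; lra.
  move/eqP: (quad0 Hd H); rewrite mulf_eq0 (gt_eqF (P0 j)) /= subr_eq0 => /eqP ->; by field.
have H : forall t, (beta * P j - gamma * a j) * t - (gamma / 2) * t ^+ 2 <= 0.
  move=> t; have := hO j (negbT jS) (a j + t); rewrite util_upd => h.
  have : 0 <= - (beta * P j * (a j + t - a j) - gamma / 2 * ((a j + t) ^+ 2 - a j ^+ 2)) by lra.
  by rewrite oppr_ge0; apply: le_trans; rewrite le_eqVlt; apply/orP; left; apply/eqP; field.
have Hd : 0 < gamma / 2 by lra.
move/eqP: (quad0 Hd H); rewrite subr_eq0 => /eqP ->; by field.
Qed.

Lemma PS_D1 (R : realFieldType) N (P : 'I_N -> R) (S : {set 'I_N}) i : i \in S -> PS P S = P i + PS P (S :\ i).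
Proof. by move=> iS; rewrite /PS (big_setD1 _ iS). Qed.

Lemma QS_D1 (R : realFieldType) N (P : 'I_N -> R) (S : {set 'I_N}) i : i \in S -> QS P (S :\ i) = P i ^+ 2 + QS P S.
Proof.
move=> iS; rewrite /QS.
have -> : ~: (S :\ i) = i |: ~: S by apply/setP => j; rewrite !inE negb_and negbK.
by rewrite big_setU1 // inE negbK.
Qed.

Lemma util_opt (R : realFieldType) N (P : 'I_N -> R) (beta gamma : R) (S : {set 'I_N}) i :
  util P beta gamma i (opt P beta gamma S) =
  beta * (beta / gamma * (PS P S ^+ 2 + QS P S)) - gamma / 2 * (opt P beta gamma S i) ^+ 2.
Proof. by rewrite /util aggA_opt. Qed.

Lemma diff_in (R : realFieldType) N (P : 'I_N -> R) (beta gamma : R) (S : {set 'I_N}) i :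
  0 < gamma -> i \in S ->
  util P beta gamma i (opt P beta gamma S) - util P beta gamma i (opt P beta gamma (S :\ i)) =
  - (beta ^+ 2 / (2 * gamma)) * (PS P S - P i) * (PS P S - 3 * P i).
Proof.
move=> g0 iS; have gn0 : gamma != 0 by rewrite gt_eqF.
rewrite !util_opt (QS_D1 _ iS) /opt iS !inE eqxx /= (PS_D1 _ iS).
set x := PS P (S :\ i). by field.
Qed.

Lemma diff_out (R : realFieldType) N (P : 'I_N -> R) (beta gamma : R) (S : {set 'I_N}) i :
  0 < gamma -> i \notin S ->
  util P beta gamma i (opt P beta gamma S) - util P beta gamma i (opt P beta gamma (i |: S)) =
  (beta ^+ 2 / (2 * gamma)) * PS P S * (PS P S - 2 * P i).
Proof.
move=> g0 iS; have gn0 : gamma != 0 by rewrite gt_eqF.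
have iS' : i \in i |: S by rewrite setU11.
have E : (i |: S) :\ i = S by rewrite setU1K.
have Q1 : QS P S = P i ^+ 2 + QS P (i |: S) by rewrite -(QS_D1 _ iS') E.
have P1 : PS P (i |: S) = P i + PS P S by rewrite (PS_D1 _ iS') E.
rewrite !util_opt /opt iS' (negbTE iS) P1 Q1.
by field.
Qed.

Lemma util_ext (R : realFieldType) N (P : 'I_N -> R) (beta gamma : R) i a b :
  (forall j, a j = b j) -> util P beta gamma i a = util P beta gamma i b.
Proof.
move=> e; rewrite /util /aggA e; congr (_ * _ - _).
by apply: eq_bigr => j _; rewrite e.
Qed.

Lemma PS_ge (R : realFieldType) N (P : 'I_N -> R) (S : {set 'I_N}) i :
  (forall i, 0 < P i) -> i \in S -> P i <= PS P S.
Proof.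
move=> P0 iS; rewrite (PS_D1 _ iS) lerDl; apply: sumr_ge0 => j _; exact: ltW.
Qed.

Lemma NE_cond (R : realFieldType) N (P : 'I_N -> R) (beta gamma : R) (S : {set 'I_N}) :
  0 < beta -> 0 < gamma -> (forall i, 0 < P i) -> S != set0 ->
  is_NE P beta gamma S <->
  ((forall i, i \in S -> PS P S <= 3 * P i) /\ (forall i, i \notin S -> 2 * P i <= PS P S)).
Proof.
move=> b0 g0 P0 Sn0.
have [k kS] : exists k, k \in S by apply/set0Pn.
have PSpos : 0 < PS P S by have := P0 k; have := PS_ge P0 kS; lra.
have c0 : 0 < beta ^+ 2 / (2 * gamma).
  by apply: divr_gt0; [apply: exprn_gt0 | apply: mulr_gt0 => //; lra].
set c := beta ^+ 2 / (2 * gamma) in c0.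
split.
  move=> NE; split.
    move=> i iS; have := NE i _ _ (@stage2_opt _ _ P beta gamma S g0 P0) (@stage2_opt _ _ P beta gamma (toggle S i) g0 P0).
    rewrite /toggle iS => /negP; rewrite -leNgt -subr_ge0 (@diff_in _ _ P beta gamma S i g0 iS) -/c => h.
    have hx := PS_ge P0 iS.
    rewrite -mulrA mulNr oppr_ge0 pmulr_rle0 // in h.
    have Pi := P0 i; nra.
  move=> i iS; have := NE i _ _ (@stage2_opt _ _ P beta gamma S g0 P0) (@stage2_opt _ _ P beta gamma (toggle S i) g0 P0).
  rewrite /toggle (negbTE iS) => /negP; rewrite -leNgt -subr_ge0 (@diff_out _ _ P beta gamma S i g0 iS) -/c => h.
  rewrite -mulrA pmulr_rge0 // pmulr_rge0 // in h; lra.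
case=> Hin Hout i a a' h h'.
rewrite (util_ext _ _ _ _ (stage2_uniq g0 P0 h)) (util_ext _ _ _ _ (stage2_uniq g0 P0 h')).
apply/negP; rewrite -leNgt -subr_ge0 /toggle; case: ifP => iS.
  rewrite (@diff_in _ _ P beta gamma S i g0 iS) -/c -mulrA mulNr oppr_ge0 pmulr_rle0 //.
  have hx := PS_ge P0 iS; have := Hin i iS; have Pi := P0 i; nra.
rewrite (@diff_out _ _ P beta gamma S i g0 (negbT iS)) -/c -mulrA pmulr_rge0 // pmulr_rge0 //.
have := Hout i (negbT iS); lra.
Qed.

Definition condS (R : realFieldType) N (P : 'I_N -> R) (S : {set 'I_N}) :=
  (forall i, i \in S -> PS P S <= 3 * P i) /\ (forall i, i \notin S -> 2 * P i <= PS P S).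

Lemma mono (R : realFieldType) N (P : 'I_N -> R) :
  (forall i j : 'I_N, (i < j)%N -> P j < P i) ->
  forall i j : 'I_N, (i <= j)%N -> P j <= P i.
Proof.
move=> Pd i j; rewrite leq_eqVlt => /orP [/eqP e|lt]; last exact/ltW/Pd.
by rewrite (val_inj e).
Qed.

Lemma PS_pair (R : realFieldType) N (P : 'I_N -> R) x y : x != y -> PS P [set x; y] = P x + P y.
Proof.
move=> nxy; rewrite /PS big_setU1 ?big_set1 // inE; exact: nxy.
Qed.

Lemma PS_one (R : realFieldType) N (P : 'I_N -> R) x : PS P [set x] = P x.
Proof. by rewrite /PS big_set1. Qed.

Lemma structure (R : realFieldType) N (P : 'I_N -> R) (i1 : 'I_N) :
  (forall i, 0 < P i) -> (forall i j : 'I_N, (i < j)%N -> P j < P i) -> val i1 = 0%N ->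
  forall S, S != set0 -> condS P S ->
  S = [set i1] \/ exists j, j != i1 /\ S = [set i1; j].
Proof.
move=> P0 Pd h1 S Sn0 [Hin Hout].
have [k0 k0S] : exists k, k \in S by apply/set0Pn.
have [k kS kmax] : exists2 k, k \in S & forall j, j \in S -> (val j <= val k)%N.
  by case: (@arg_maxnP _ k0 (mem S) val k0S) => k kS km; exists k.
have ltk : forall j, j \in S -> j != k -> P k < P j.
  move=> j jS njk; apply: Pd; rewrite ltn_neqAle kmax // andbT.
  by apply: contra njk => /eqP e; apply/eqP/val_inj.
have card2 : (#|S| <= 2)%N.
  rewrite leqNgt; apply/negP => c3.
  have hA : (0 < #|S :\ k|)%N by move: c3; rewrite (cardsD1 k) kS; case: #|_|.
  have [j jA] := card_gt0P hA.
  have hA' : (0 < #|(S :\ k) :\ j|)%N by move: c3; rewrite (cardsD1 k) kS (cardsD1 j (S :\ k)) jA; case: #|_|.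
  have [j' jA'] := card_gt0P hA'.
  have := Hin k kS; rewrite (PS_D1 _ kS) (PS_D1 _ jA).
  have := PS_ge P0 jA'.
  move: jA' jA; rewrite !inE => /andP [nj'j /andP [nj'k j'S]] /andP [njk jS].
  have := ltk _ jS njk; have := ltk _ j'S nj'k; lra.
have Pi1 : forall j, j != i1 -> P j < P i1.
  move=> j nj; apply: Pd; rewrite h1 lt0n; apply: contra nj => /eqP e.
  by apply/eqP/val_inj; rewrite /= e h1.
have i1S : i1 \in S.
  apply/negPn/negP => ni1; have := Hout _ ni1.
  move: card2; rewrite leq_eqVlt ltnS leq_eqVlt ltnS leqn0 cards_eq0 (negbTE Sn0) orbF.
  case/orP => [/cards2P [x [y [nxy eS]]]|/cards1P [x eS]]; rewrite eS in ni1 *.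
    rewrite PS_pair //; move: ni1; rewrite !inE negb_or eq_sym => /andP [nx ny].
    rewrite eq_sym in ny; have := Pi1 _ nx; have := Pi1 _ ny; lra.
  rewrite PS_one; move: ni1; rewrite !inE eq_sym => nx; have := P0 i1; have := Pi1 _ nx; lra.
move: card2; rewrite leq_eqVlt ltnS leq_eqVlt ltnS leqn0 cards_eq0 (negbTE Sn0) orbF.
case/orP => [/cards2P [x [y [nxy eS]]]|/cards1P [x eS]].
  right; move: i1S; rewrite eS !inE => /orP [/eqP e|/eqP e].
    by exists y; rewrite e eq_sym; split.
  by exists x; rewrite e setUC; split.
by left; move: i1S; rewrite eS inE => /eqP ->.
Qed.

Lemma Pi1_lt (R : realFieldType) N (P : 'I_N -> R) (i1 : 'I_N) :
  (forall i j : 'I_N, (i < j)%N -> P j < P i) -> val i1 = 0%N ->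
  forall j, j != i1 -> P j < P i1.
Proof.
move=> Pd h1 j nj; apply: Pd; rewrite h1 lt0n; apply: contra nj => /eqP e.
by apply/eqP/val_inj; rewrite /= e h1.
Qed.

Lemma Pi2_le (R : realFieldType) N (P : 'I_N -> R) (i1 i2 : 'I_N) :
  (forall i j : 'I_N, (i < j)%N -> P j < P i) -> val i1 = 0%N -> val i2 = 1%N ->
  forall j, j != i1 -> P j <= P i2.
Proof.
move=> Pd h1 h2 j nj; apply: (mono Pd); rewrite h2 lt0n; apply: contra nj => /eqP e.
by apply/eqP/val_inj; rewrite /= e h1.
Qed.

Lemma Pi2_lt (R : realFieldType) N (P : 'I_N -> R) (i1 i2 : 'I_N) :
  (forall i j : 'I_N, (i < j)%N -> P j < P i) -> val i1 = 0%N -> val i2 = 1%N ->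
  forall j, j != i1 -> j != i2 -> P j < P i2.
Proof.
move=> Pd h1 h2 j nj nj2; apply: Pd; rewrite h2.
have : val j != 0%N by apply: contra nj => /eqP e; apply/eqP/val_inj; rewrite /= e h1.
have : val j != 1%N by apply: contra nj2 => /eqP e; apply/eqP/val_inj; rewrite /= e h2.
move=> /eqP a /eqP b; move: a b; case: j {nj nj2} => m hm /= a b; lia.
Qed.

Lemma cond1 (R : realFieldType) N (P : 'I_N -> R) (i1 i2 : 'I_N) :
  (forall i, 0 < P i) ->
  (forall i j : 'I_N, (i < j)%N -> P j < P i) -> val i1 = 0%N -> val i2 = 1%N ->
  condS P [set i1] <-> 2 * P i2 <= P i1.
Proof.
move=> P0 Pd h1 h2; have n21 : i2 != i1.
  by apply/negP => /eqP e; move: h2; rewrite e h1.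
rewrite /condS PS_one; split.
  by case=> _ /(_ i2); rewrite inE; apply.
move=> h; split.
  by move=> i; rewrite inE => /eqP ->; have := P0 i1; lra.
move=> i; rewrite inE => ni; have := Pi2_le Pd h1 h2 ni; lra.
Qed.

Lemma cond2 (R : realFieldType) N (P : 'I_N -> R) (i1 i2 : 'I_N) :
  (forall i, 0 < P i) ->
  (forall i j : 'I_N, (i < j)%N -> P j < P i) -> val i1 = 0%N -> val i2 = 1%N ->
  forall j, j != i1 ->
  condS P [set i1; j] <-> (P i1 <= 2 * P j /\ (j = i2 \/ 2 * P i2 <= P i1 + P j)).
Proof.
move=> P0 Pd h1 h2 j nj; have n21 : i2 != i1.
  by apply/negP => /eqP e; move: h2; rewrite e h1.
rewrite /condS PS_pair 1?eq_sym //; split.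
  case=> Hin Hout; split; first by have := Hin j; rewrite !inE eqxx orbT => /(_ isT); lra.
  have [e|ne] := eqVneq j i2; [by left | right].
  by apply: Hout; rewrite !inE negb_or n21 eq_sym ne.
case=> hj hj2; split.
  move=> i; rewrite !inE => /orP [/eqP ->|/eqP ->]; last lra.
  have := Pi1_lt Pd h1 nj; have := P0 j; lra.
move=> k; rewrite !inE negb_or => /andP [nk1 nkj].
case: hj2 => [e|h].
  rewrite e in nkj *; have := Pi2_lt Pd h1 h2 nk1 nkj; have := Pi1_lt Pd h1 n21; lra.
have := Pi2_le Pd h1 h2 nk1; lra.
Qed.

Unset Implicit Arguments.

Theorem proposition4 (R : realFieldType) (N : nat) (P : 'I_N -> R)
    (beta gamma : R) (i1 i2 : 'I_N) :
  (3 <= N)%N -> 0 < beta -> 0 < gamma ->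
  (forall i, 0 < P i) ->
  (forall i j : 'I_N, (i < j)%N -> P j < P i) ->
  val i1 = 0%N -> val i2 = 1%N ->
  (forall S : {set 'I_N}, S != set0 -> is_NE P beta gamma S ->
     (#|S| <= 2)%N /\ i1 \in S) /\
  (2 * P i2 < P i1 -> forall S : {set 'I_N}, S != set0 ->
     (is_NE P beta gamma S <-> S = [set i1])) /\
  (2 * P i2 = P i1 -> forall S : {set 'I_N}, S != set0 ->
     (is_NE P beta gamma S <-> S = [set i1] \/ S = [set i1; i2])) /\
  (P i1 < 2 * P i2 ->
     exists l : 'I_N,
       Num.max (P i1 / 2) (2 * P i2 - P i1) <= P l /\
       (forall k : 'I_N, Num.max (P i1 / 2) (2 * P i2 - P i1) <= P k ->
          (k <= l)%N) /\
       (forall S : {set 'I_N}, S != set0 ->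
          (is_NE P beta gamma S <->
             exists j : 'I_N, (1 <= j <= l)%N /\ S = [set i1; j]))).
Proof.
move=> N3 b0 g0 P0 Pd h1 h2.
have n21 : i2 != i1 by apply/negP => /eqP e; move: h2; rewrite e h1.
have NEc : forall S, S != set0 -> is_NE P beta gamma S <-> condS P S.
  by move=> S Sn0; exact: NE_cond.
have ST := structure P0 Pd h1.
have C1 := cond1 P0 Pd h1 h2.
have C2 := cond2 P0 Pd h1 h2.
have Pl1 := Pi1_lt Pd h1.
have Pl2 := Pi2_le Pd h1 h2.
have Pt2 := Pi2_lt Pd h1 h2.
split.
  move=> S Sn0 /(NEc S Sn0) cS; case: (ST S Sn0 cS) => [->|[j [nj ->]]].
    by rewrite cards1 inE eqxx.
  by rewrite cards2 !inE eqxx /= ltnS leq_b1.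
split.
  move=> lt S Sn0; rewrite NEc //; split.
    move=> cS; case: (ST _ Sn0 cS) => [//|[j [nj eS]]]; rewrite eS in cS.
    move/(C2 j nj): cS => [hj _]; exfalso; have := Pl2 _ nj; have := P0 j; lra.
  by move=> ->; apply/C1; lra.
split.
  move=> eq S Sn0; rewrite NEc //; split.
    move=> cS; case: (ST _ Sn0 cS) => [->|[j [nj eS]]]; first by left.
    rewrite eS in cS *; move/(C2 j nj): cS => [hj _]; right.
    have [->//|nj2] := eqVneq j i2.
    exfalso; have := Pt2 _ nj nj2; lra.
  case=> ->; first by apply/C1; lra.
  by apply/(C2 i2 n21); split; [lra | left].
move=> lt.
set M := Num.max (P i1 / 2) (2 * P i2 - P i1).
have Mi2 : M <= P i2 by rewrite /M ge_max; apply/andP; split; have := Pl1 _ n21; lra.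
have [l Ml lmax] : exists2 l : 'I_N, M <= P l & forall k : 'I_N, M <= P k -> (k <= l)%N.
  by case: (@arg_maxnP _ i2 (fun k => M <= P k) val Mi2) => k kS km; exists k.
exists l; split => //; split => // S Sn0; rewrite NEc //; split.
  move=> cS; case: (ST _ Sn0 cS) => [eS|[j [nj eS]]].
    by rewrite eS in cS; move/C1: cS; lra.
  rewrite eS in cS *; move/(C2 j nj): cS => [hj hj2].
  have Mj : M <= P j.
    rewrite /M ge_max; apply/andP; split; first lra.
    case: hj2 => [e|]; last lra.
    by rewrite e; have := Pl1 _ n21; lra.
  exists j; split => //; rewrite lmax // andbT lt0n.
  by apply: contra nj => /eqP e; apply/eqP/val_inj; rewrite /= e h1.
case=> j [/andP [j1 jl] ->].
have nj : j != i1 by apply/negP => /eqP e; move: j1; rewrite e h1.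
have Mj : M <= P j by apply: le_trans Ml (mono Pd jl).
move: Mj; rewrite /M ge_max => /andP [m1 m2].
by apply/(C2 j nj); split; [lra | right; lra].
Qed.
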